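(* Let $n\ge 1$ and $1<k\le 2n$. Suppose that for every 1D array of size $n$ there is an $S(n,k)$-bit encoding from which sorted 1-sided Top-$k$ queries can be answered. Then every $2\times n$ array $A$ admits an encoding of $2S(n,k)+\lceil 2n\lg 3\rceil+o(n)$ bits from which every sorted 3-sided Top-$k$ query on $A$ can be answered.
   Context: All arrays have pairwise distinct entries from a totally ordered set. For a 1D array $B[1..n]$ and $1\le i\le j\le n$, the query Top-$k(i,j,B)$ returns the positions of the $k$ largest values of $B[i..j]$ (all positions of $B[i..j]$ if it has at most $k$ entries); a query is sorted if the positions must be reported in decreasing order of their values, unsorted if in any order; 1-sided queries are those with $i=1$, 2-sided queries allow arbitrary $i\le j$. For an $m\times n$ array $A$, Top-$k(i,j,a,b,A)$ (with $1\le i\le j\le m$, $1\le a\le b\le n$) returns the positions of the $k$ largest values in the subarray $A[i..j][a..b]$; 3-sided queries are those with $a=1$, 4-sided queries allow arbitrary $a\le b$. An $s$-bit encoding supporting a family of queries is a map assigning to each array a bit string of length at most $s$ such that every query of the family can be answered from this bit string alone, without access to the array. *)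

(* Defs.v *)
From mathcomp Require Import all_boot.
Set Implicit Arguments. Unset Strict Implicit. Unset Printing Implicit Defensive.

(* Values are pairwise distinct, so this list is uniquely determined. *)
Definition topk (P : finType) (k : nat) (v : P -> nat) (R : pred P) : seq P :=
  take k (sort (fun x y => v y <= v x) [seq x <- enum P | R x]).

(* 1D array of size n: B : 'I_n -> nat, injective (distinct entries).
   Sorted 1-sided query Top-k(1, j, B) with j 0-indexed. *)
Definition top1 (n k : nat) (B : 'I_n -> nat) (j : 'I_n) : seq 'I_n :=
  topk k B (fun i => i <= j).

Definition enc1D (n k s : nat) : Prop :=
  exists (E : ('I_n -> nat) -> seq bool) (D : seq bool -> 'I_n -> seq 'I_n),
    forall B : 'I_n -> nat, injective B ->
      size (E B) <= s /\ forall j : 'I_n, D (E B) j = top1 k B j.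

(* 2 x n array: A : 'I_2 * 'I_n -> nat, injective; position (row, column).
   Sorted 3-sided query Top-k(i, j, 1, b, A) (0-indexed, i <= j). *)
Definition top3 (n k : nat) (A : 'I_2 * 'I_n -> nat) (i j : 'I_2) (b : 'I_n)
  : seq ('I_2 * 'I_n) :=
  topk k A (fun p => (i <= p.1) && (p.1 <= j) && (p.2 <= b)).

Definition enc2D (n k s : nat) : Prop :=
  exists (E : ('I_2 * 'I_n -> nat) -> seq bool)
         (D : seq bool -> 'I_2 -> 'I_2 -> 'I_n -> seq ('I_2 * 'I_n)),
    forall A : 'I_2 * 'I_n -> nat, injective A ->
      size (E A) <= s /\
      forall (i j : 'I_2) (b : 'I_n), i <= j -> D (E A) i j b = top3 k A i j b.

Definition little_o_n (f : nat -> nat) : Prop :=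
  forall c : nat, 0 < c -> exists N : nat, forall n : nat, N <= n -> c * f n <= n.

(* Main.v *)
Require Import Defs.
From mathcomp Require Import all_boot.
Set Implicit Arguments. Unset Strict Implicit. Unset Printing Implicit Defensive.

Section Gen.
Variable T : finType.

Definition relv (v : T -> nat) := fun x y => v y <= v x.

Lemma relv_tr v : transitive (relv v).
Proof. by move=> x y z; rewrite /relv => h1 h2; apply: leq_trans h2 h1. Qed.
Lemma relv_tot v : total (relv v).
Proof. by move=> x y; rewrite /relv leq_total. Qed.

Lemma ord_sorted v s : injective v -> sorted (relv v) s -> uniq s ->
  {in s &, forall x y, index x s < index y s -> v y < v x}.
Proof.
move=> vi ss us x y xs ys hi.
have := sorted_ltn_index (@relv_tr v) ss x y xs ys hi; rewrite /relv leq_eqVlt.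
case/orP => // /eqP /vi e; by rewrite e ltnn in hi.
Qed.

Lemma agree_sorted v v' s : injective v -> injective v' ->
  sorted (relv v) s -> sorted (relv v') s -> uniq s ->
  {in s &, forall x y, (v y <= v x) = (v' y <= v' x)}.
Proof.
move=> vi vi' ss ss' us x y xs ys.
case: (ltngtP (index x s) (index y s)) => h.
- by rewrite (ltnW (ord_sorted vi ss us xs ys h)) (ltnW (ord_sorted vi' ss' us xs ys h)).
- by rewrite leqNgt (ord_sorted vi ss us ys xs h) leqNgt (ord_sorted vi' ss' us ys xs h).
- have : nth x s (index x s) = nth x s (index y s) by rewrite h.
  by rewrite !nth_index // => ->; rewrite !leqnn.
Qed.

Lemma count_index v s x : injective v -> sorted (relv v) s -> uniq s -> x \in s ->
  count (fun y => v x < v y) s = index x s.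
Proof.
move=> vi; elim: s => //= a t IH ss /andP[an ut].
have pt := path_sorted ss.
have at_ : all (relv v a) t := order_path_min (@relv_tr v) ss.
rewrite in_cons; case: (eqVneq x a) => [->|xa] /= => [_|xt].
  rewrite ltnn add0n; apply/eqP; rewrite -leqn0 leqNgt -has_count; apply/negP.
  case/hasP => y yt; by move: (allP at_ y yt); rewrite /relv leqNgt => /negPf ->.
rewrite (IH pt ut xt).
have -> : v x < v a.
  have := allP at_ x xt; rewrite /relv leq_eqVlt; case/orP => // /eqP /vi e.
  by rewrite e eqxx in xa.
by rewrite add1n.
Qed.

Lemma topk_mem k v (R : pred T) x : injective v ->
  (x \in topk k v R) = R x && (count (fun y => R y && (v x < v y)) (enum T) < k).
Proof.
move=> vi; rewrite /topk.
set s := sort _ _.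
have ms : (x \in s) = R x by rewrite mem_sort mem_filter mem_enum andbT.
have ss : sorted (relv v) s by apply: sort_sorted; exact: relv_tot.
have us : uniq s by rewrite sort_uniq filter_uniq // enum_uniq.
case Rx: (R x); last by apply/negP => /mem_take; rewrite ms Rx.
have xs : x \in s by rewrite ms.
rewrite (in_take _ xs) -(count_index vi ss us xs).
rewrite (permP (permEl (perm_sort _ _))) count_filter /=.
by congr (_ < k); apply: eq_count => y /=; rewrite andbC.
Qed.

Lemma topk_sorted k (v : T -> nat) (R : pred T) : sorted (relv v) (topk k v R).
Proof. by apply: take_sorted; apply: sort_sorted; exact: relv_tot. Qed.
Lemma topk_uniq k (v : T -> nat) (R : pred T) : uniq (topk k v R).
Proof. by apply: take_uniq; rewrite sort_uniq filter_uniq // enum_uniq. Qed.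


Lemma topk_lt k v (R : pred T) a b : injective v ->
  a \in topk k v R -> R b -> b \notin topk k v R -> v b < v a.
Proof.
move=> vi; rewrite /topk; set s := sort _ _ => ain Rb bn.
have ms y : (y \in s) = R y by rewrite mem_sort mem_filter mem_enum andbT.
have ss : sorted (relv v) s by apply: sort_sorted; exact: relv_tot.
have us : uniq s by rewrite sort_uniq filter_uniq // enum_uniq.
have as_ : a \in s by apply: mem_take ain.
have bs : b \in s by rewrite ms.
apply: (ord_sorted vi ss us as_ bs).
move: ain bn; rewrite !in_take //; rewrite -ltnNge; apply: leq_trans.
Qed.

Lemma take_filter (Y : pred T) k s : all Y (take k s) -> take k (filter Y s) = take k s.
Proof.
elim: s k => [|a t IH] [|k] //=.
- by rewrite take0.
- by move=> /andP[Ya h]; rewrite Ya /= IH.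
Qed.

Lemma topk_restrict k v (R Y : pred T) : {subset topk k v R <= Y} ->
  topk k v R = topk k v (fun x => R x && Y x).
Proof.
move=> sub; rewrite /topk.
have -> : [seq x <- enum T | R x && Y x] = filter Y (filter R (enum T)).
  by rewrite -filter_predI; apply: eq_filter => x /=; rewrite andbC.
have := filter_sort (@relv_tot v) (@relv_tr v) Y (filter R (enum T)).
rewrite /relv => <-.
by rewrite take_filter //; apply/allP.
Qed.

Lemma sort_agree v v' (l : seq T) : injective v' ->
  {in l &, forall x y, (v y <= v x) = (v' y <= v' x)} ->
  sort (relv v) l = sort (relv v') l.
Proof.
move=> vi' ag.
apply: (@sorted_eq _ (relv v')).
- exact: relv_tr.
- by move=> x y /andP[h1 h2]; apply: vi'; apply/eqP; rewrite /relv in h1 h2; rewrite eqn_leq h1 h2.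
- apply: (@sub_in_sorted _ (mem l) (relv v)).
  + by move=> x y xl yl; rewrite /relv ag.
  + by apply/allP => x; rewrite mem_sort.
  + apply: sort_sorted; exact: relv_tot.
- apply: sort_sorted; exact: relv_tot.
- by rewrite perm_sort perm_sym perm_sort.
Qed.


Lemma topk_agree k v v' (Q : pred T) : injective v' ->
  {in filter Q (enum T) &, forall x y, (v y <= v x) = (v' y <= v' x)} ->
  topk k v Q = topk k v' Q.
Proof. by move=> vi' ag; rewrite /topk; congr take; exact: sort_agree. Qed.

End Gen.

Lemma agree_labels (T : eqType) (lab : T -> bool) (s s' : seq T) :
  map lab s = map lab s' -> filter lab s = filter lab s' ->
  filter (predC lab) s = filter (predC lab) s' -> s = s'.
Proof.
elim: s s' => [|a t IH] [|a' t'] //= [la e] f1 f2.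
move: f1 f2; rewrite -la; case: (lab a) => /=.
  by move=> [-> h1] h2; congr (_ :: _); apply: IH.
by move=> h1 [-> h2]; congr (_ :: _); apply: IH.
Qed.

Lemma row_agree n k (B B' : 'I_n -> nat) : injective B -> injective B' ->
  (forall j, top1 k B j = top1 k B' j) ->
  forall c c', c \in top1 k B c -> c' \in top1 k B c' ->
  (B c' <= B c) = (B' c' <= B' c).
Proof.
move=> Bi Bi' tab c c' hc hc'.
have ag L : L = top1 k B c' \/ L = top1 k B c -> 
  {in L &, forall x y, (B y <= B x) = (B' y <= B' x)}.
  move=> hL; apply: agree_sorted => //.
  - by case: hL => ->; apply: topk_sorted.
  - by case: hL => ->; rewrite tab; apply: topk_sorted.
  - by case: hL => ->; apply: topk_uniq.
case: (leqP c c') => hcc.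
  case ci: (c \in top1 k B c').
    exact: (ag _ (or_introl erefl)).
  have h1 : B c < B c'.
    apply: (topk_lt Bi hc' hcc). by rewrite ci.
  have hc'' : c' \in top1 k B' c'.
    rewrite -(tab c'); exact: hc'.
  have cn : c \notin top1 k B' c'.
    rewrite -(tab c'). rewrite ci; exact: isT.
  have h2 : B' c < B' c'.
    have h3 := topk_lt Bi' hc''. exact (h3 c hcc cn).
  by rewrite leqNgt h1 [in RHS]leqNgt h2.
case ci: (c' \in top1 k B c).
  exact: (ag _ (or_intror erefl)).
have h1 : B c' < B c.
  have h3 := topk_lt Bi hc. apply: (h3 c' (ltnW hcc)). rewrite ci; exact: isT.
have hc'' : c \in top1 k B' c.
  rewrite -(tab c); exact: hc.
have cn : c' \notin top1 k B' c.
  rewrite -(tab c) ci; exact: isT.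
have h2 : B' c' < B' c.
  have h3 := topk_lt Bi' hc''. exact (h3 c' (ltnW hcc) cn).
by rewrite (ltnW h1) (ltnW h2).
Qed.




Lemma topk_eqR (T : finType) k (v : T -> nat) (R R' : pred T) : R =1 R' ->
  topk k v R = topk k v R'.
Proof. by move=> e; rewrite /topk (eq_filter e). Qed.

Definition rowf n (A : 'I_2 * 'I_n -> nat) (r : 'I_2) : 'I_n -> nat := fun j => A (r, j).
Definition Xp n k (A : 'I_2 * 'I_n -> nat) (p : 'I_2 * 'I_n) : bool :=
  p.2 \in top1 k (rowf A p.1) p.2.
Definition lab n (p : 'I_2 * 'I_n) : bool := (p.1 : nat) == 0.
Definition sX n k (A : 'I_2 * 'I_n -> nat) :=
  sort (relv A) (filter (Xp k A) (enum {: 'I_2 * 'I_n})).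
Definition wA n k (A : 'I_2 * 'I_n -> nat) := map (@lab n) (sX k A).

Lemma rowf_inj n (A : 'I_2 * 'I_n -> nat) r : injective A -> injective (rowf A r).
Proof. by move=> Ai x y /Ai []. Qed.

Lemma lab_eq (r r' : 'I_2) : ((r : nat) == 0) = ((r' : nat) == 0) -> r = r'.
Proof.
case: r => [[|[|m]] hr]; case: r' => [[|[|m']] hr'] //= _; by apply/val_inj.
Qed.

Lemma top3_X n k (A : 'I_2 * 'I_n -> nat) i j b p : injective A ->
  p \in top3 k A i j b -> Xp k A p.
Proof.
case: p => r c Ai; rewrite /top3 topk_mem // => /andP[Rp cnt].
rewrite /Xp /top1 topk_mem; last exact: rowf_inj.
rewrite (leqnn (c : nat)) /=.
apply: leq_ltn_trans cnt.
rewrite -!size_filter -(size_map (fun j' => (r, j'))).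
apply: uniq_leq_size.
  rewrite map_inj_uniq; first by apply: filter_uniq; apply: enum_uniq.
  by move=> x y [].
move=> y /mapP [j']; rewrite mem_filter => /andP[/andP[hj hA] _] ->.
rewrite mem_filter mem_enum andbT /=.
move: Rp => /= /andP[/andP[h1 h2] h3].
by rewrite h1 h2 (leq_trans hj h3).
Qed.

Lemma main_eq n k (A A' : 'I_2 * 'I_n -> nat) : injective A -> injective A' ->
  (forall r j, top1 k (rowf A r) j = top1 k (rowf A' r) j) -> wA k A = wA k A' ->
  forall i j b, top3 k A i j b = top3 k A' i j b.
Proof.
move=> Ai Ai' tab ww i j b.
have XX : Xp k A =1 Xp k A' by move=> [r c]; rewrite /Xp /= tab.
set l := filter (Xp k A) (enum {: 'I_2 * 'I_n}).
have ll : filter (Xp k A') (enum {: 'I_2 * 'I_n}) = l.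
  by apply: eq_filter => p; rewrite XX.
have rowag : {in l &, forall x y, lab x = lab y -> (A y <= A x) = (A' y <= A' x)}.
  move=> [r c] [r' c']; rewrite !mem_filter /Xp /lab /= => /andP[hx _] /andP[hy _] hl.
  have rr := lab_eq hl; subst r'.
  exact: (row_agree (rowf_inj (r:=r) Ai) (rowf_inj (r:=r) Ai') (tab r) hx hy).
have fs (v : 'I_2 * 'I_n -> nat) (p : pred ('I_2 * 'I_n)) s :
    filter p (sort (relv v) s) = sort (relv v) (filter p s).
  exact: (filter_sort (@relv_tot _ v) (@relv_tr _ v)).
have sXs : sX k A = sX k A'.
  apply: (@agree_labels _ (@lab n)) => //.
  - rewrite /sX ll !fs; apply: sort_agree => // x y.
    rewrite [x \in _]mem_filter [y \in _]mem_filter => /andP[lx xl] /andP[ly yl].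
    by apply: rowag => //; rewrite lx ly.
  - rewrite /sX ll !fs; apply: sort_agree => // x y.
    rewrite [x \in _]mem_filter [y \in _]mem_filter => /andP[lx xl] /andP[ly yl].
    by apply: rowag => //; move: lx ly => /= /negPf -> /negPf ->.
have ss : sorted (relv A) (sX k A) by apply: sort_sorted; exact: relv_tot.
have ss' : sorted (relv A') (sX k A) by rewrite sXs; apply: sort_sorted; exact: relv_tot.
have us : uniq (sX k A) by rewrite sort_uniq filter_uniq // enum_uniq.
have ag : {in l &, forall x y, (A y <= A x) = (A' y <= A' x)}.
  move=> x y xl yl; apply: (agree_sorted Ai Ai' ss ss' us); by rewrite mem_sort.
rewrite /top3.
rewrite (topk_restrict (Y := Xp k A)); last by move=> p /top3_X; apply.
rewrite [RHS](topk_restrict (Y := Xp k A')); last by move=> p /top3_X; apply.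
rewrite [RHS](topk_eqR _ _ (R' := fun p : 'I_2 * 'I_n => (i <= p.1) && (p.1 <= j) && (p.2 <= b) && Xp k A p)); last first.
  by move=> p; rewrite XX.
apply: topk_agree => // x y hx hy; apply: ag; rewrite /l mem_filter mem_enum andbT;
  [move: hx|move: hy]; rewrite mem_filter mem_enum andbT; by case/andP.
Qed.

From Stdlib Require Import ClassicalEpsilon.
From mathcomp Require Import zify.

Definition pad (L : nat) (s : seq bool) := nseq (L - size s) false ++ true :: s.
Definition unpad (l : seq bool) := behead (drop (find id l) l).

Lemma unpadK L s : unpad (pad L s) = s.
Proof.
rewrite /unpad /pad find_cat has_nseq andbF /= size_nseq addn0.
by rewrite drop_size_cat ?size_nseq.
Qed.

Lemma size_pad L s : size s <= L -> size (pad L s) = L.+1.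
Proof. by move=> h; rewrite /pad size_cat size_nseq /= addnS subnK. Qed.

Lemma size_wA n k (A : 'I_2 * 'I_n -> nat) : size (wA k A) <= 2 * n.
Proof.
rewrite /wA /sX size_map size_sort size_filter.
apply: leq_trans (count_size _ _) _.
by rewrite -cardE card_prod !card_ord.
Qed.

Lemma uplog_ge n : 2 * n <= up_log 2 (3 ^ (2 * n)).
Proof.
case: n => [|n] //.
rewrite leqNgt; apply/negP => h.
have h1 := @up_logP 2 (3 ^ (2 * n.+1)) isT.
have h2 : 2 ^ up_log 2 (3 ^ (2 * n.+1)) <= 2 ^ (2 * n.+1) by rewrite leq_exp2l // ltnW.
have h3 : 2 ^ (2 * n.+1) < 3 ^ (2 * n.+1) by rewrite ltn_exp2r // muln_gt0.
have := leq_trans h1 h2; by rewrite leqNgt h3.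
Qed.

Theorem theorem3 :
  exists f : nat -> nat, little_o_n f /\
  forall (S : nat -> nat -> nat) (n k : nat),
    1 <= n -> 1 < k -> k <= 2 * n ->
    enc1D n k (S n k) ->
    enc2D n k (2 * S n k + up_log 2 (3 ^ (2 * n)) + f n).
Proof.
exists (fun _ => 3); split.
  by move=> c c0; exists (3 * c) => m hm; rewrite mulnC.
move=> S n k n1 _ _ [E1 [D1 H1]].
set s := S n k.
pose E := fun A : 'I_2 * 'I_n -> nat =>
  pad s (E1 (rowf A ord0)) ++ pad s (E1 (rowf A ord_max)) ++ pad (2 * n) (wA k A).
pose D := fun (c : seq bool) (i j : 'I_2) (b : 'I_n) =>
  match excluded_middle_informative (exists A, injective A /\ E A = c) with
  | left h => top3 k (proj1_sig (constructive_indefinite_description _ h)) i j b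
  | right _ => [::] end.
exists E, D => A Ai; split.
  have hs r : size (E1 (rowf A r)) <= s by apply: (proj1 (H1 _ (rowf_inj Ai))).
  rewrite /E size_cat (size_pad (hs _)) size_cat (size_pad (hs _)) (size_pad (size_wA k A)).
  have := uplog_ge n; lia.
move=> i j b hij; rewrite /D.
case: excluded_middle_informative => [h|h]; last by exfalso; apply: h; exists A.
case: (constructive_indefinite_description _ h) => A' /= [Ai' EA].
have hs (B : 'I_2 * 'I_n -> nat) r : injective B -> size (E1 (rowf B r)) <= s.
  by move=> Bi; apply: (proj1 (H1 _ (rowf_inj Bi))).
move: EA; rewrite /E => /eqP.
rewrite eqseq_cat; last by rewrite !size_pad ?hs.
case/andP => /eqP p0; rewrite eqseq_cat; last by rewrite !size_pad ?hs.
case/andP => /eqP p1 /eqP p2.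
have e0 := congr1 unpad p0; have e1 := congr1 unpad p1; have e2 := congr1 unpad p2.
rewrite !unpadK in e0 e1 e2.
apply: main_eq => // r j'.
have rE : r = ord0 \/ r = ord_max.
  case: r => [[|[|m]] hr]; [left|right|] => //; exact: val_inj.
rewrite -(proj2 (H1 _ (rowf_inj (r:=r) Ai'))) -(proj2 (H1 _ (rowf_inj (r:=r) Ai))).
by case: rE => ->; rewrite ?e0 ?e1.
Qed.
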